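(* Let $L\subset M$ be Noetherian $R_2$-modules such that $M/L\cong R_2/\mathfrak{p}$ for a prime ideal $\mathfrak{p}\subset R_2$, let $\Lambda\in\mathcal{L}_2$, and assume $M/\mathfrak{b}_\Lambda M$ is finite. Then there is an ideal $\mathfrak{a}\subset R_2$ with $\mathfrak{b}_\Lambda\mathfrak{p}\subset\mathfrak{a}\subset\mathfrak{b}_\Lambda\cap\mathfrak{p}$ such that \[|M/\mathfrak{b}_\Lambda M|=\left|\frac{R_2/\mathfrak{p}}{\mathfrak{b}_\Lambda(R_2/\mathfrak{p})}\right|\cdot\frac{|L/\mathfrak{b}_\Lambda L|}{|(\mathfrak{b}_\Lambda\cap\mathfrak{p})/\mathfrak{a}|}.\]
   Context: $R_2=\mathbb{Z}[u_1^{\pm1},u_2^{\pm1}]$; $\mathcal{L}_2$ is the set of finite-index subgroups of $\mathbb{Z}^2$; for $\Lambda\in\mathcal{L}_2$, $\mathfrak{b}_\Lambda$ is the ideal of $R_2$ generated by $\{u^{\mathbf{n}}-1:\mathbf{n}\in\Lambda\}$ with $u^{\mathbf{n}}=u_1^{n_1}u_2^{n_2}$. *)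

(* Defs.v *)
From HB Require Import structures.
From mathcomp Require Import all_boot all_order all_algebra.
From Stdlib Require List.
Set Implicit Arguments. Unset Strict Implicit. Unset Printing Implicit Defensive.
Import Order.TTheory GRing.Theory Num.Theory.
Local Open Scope ring_scope.

Definition lmono (R : comUnitRingType) (u1 u2 : R) (n : int * int) : R :=
  u1 ^ n.1 * u2 ^ n.2.

(* R, together with u1 u2, is the Laurent polynomial ring Z[u1^{+-1},u2^{+-1}]:
   u1, u2 are units and the integer monomials u^n (n in Z^2) form a Z-basis of R
   (every element is a finite Z-combination of monomials, uniquely). *)
Definition is_laurent2 (R : comUnitRingType) (u1 u2 : R) : Prop :=
  [/\ u1 \is a GRing.unit, u2 \is a GRing.unit,
      (forall r : R, exists s : seq ((int * int) * int),
          r = \sum_(t <- s) (t.2)%:~R * lmono u1 u2 t.1)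
    & (forall s : seq ((int * int) * int), uniq (map fst s) ->
          \sum_(t <- s) (t.2)%:~R * lmono u1 u2 t.1 = 0 ->
          forall t, t \in s -> t.2 = 0)].

Definition is_fi_subgroup (Lam : int * int -> Prop) : Prop :=
  [/\ Lam (0, 0),
      (forall a b, Lam a -> Lam b -> Lam (a.1 - b.1, a.2 - b.2))
    & exists reps : seq (int * int), forall n, exists2 r, r \in reps &
          Lam (n.1 - r.1, n.2 - r.2)].

Definition is_ideal (R : comUnitRingType) (I : R -> Prop) : Prop :=
  [/\ I 0, (forall x y, I x -> I y -> I (x + y)) & (forall r x, I x -> I (r * x))].

Definition is_prime_ideal (R : comUnitRingType) (P : R -> Prop) : Prop :=
  [/\ is_ideal P, ~ P 1 & forall x y, P (x * y) -> P x \/ P y].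

Definition bideal (R : comUnitRingType) (u1 u2 : R) (Lam : int * int -> Prop)
  (x : R) : Prop :=
  exists s : seq (R * (int * int)), (forall t, List.In t s -> Lam t.2) /\
    x = \sum_(t <- s) t.1 * (lmono u1 u2 t.2 - 1).

Definition idprod (R : comUnitRingType) (I J : R -> Prop) (x : R) : Prop :=
  exists s : seq (R * R), (forall t, List.In t s -> I t.1 /\ J t.2) /\
    x = \sum_(t <- s) t.1 * t.2.

Definition idsum (R : comUnitRingType) (I J : R -> Prop) (x : R) : Prop :=
  exists a b, [/\ I a, J b & x = a + b].

Definition is_submod (R : comUnitRingType) (M : lmodType R) (N : M -> Prop) : Prop :=
  [/\ N 0, (forall x y, N x -> N y -> N (x + y)) & (forall (r : R) x, N x -> N (r *: x))].

Definition idmod (R : comUnitRingType) (M : lmodType R) (I : R -> Prop) (N : M -> Prop)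
  (x : M) : Prop :=
  exists s : seq (R * M), (forall t, List.In t s -> I t.1 /\ N t.2) /\
    x = \sum_(t <- s) t.1 *: t.2.

Definition fg_submod (R : comUnitRingType) (M : lmodType R) (N : M -> Prop) : Prop :=
  exists gens : seq M, (forall g, List.In g gens -> N g) /\
    forall x, N x -> exists c : seq R,
      x = \sum_(i < size gens) c`_i *: gens`_i.

Definition noetherian_sub (R : comUnitRingType) (M : lmodType R) (N : M -> Prop) : Prop :=
  forall K : M -> Prop, is_submod K -> (forall x, K x -> N x) -> fg_submod K.

(* qcard A B n : the quotient A/B (B subset A additive subgroups of X) is finite
   with exactly n elements: a complete irredundant system of n representatives. *)
Definition qcard (X : zmodType) (A B : X -> Prop) (n : nat) : Prop :=
  exists s : seq X, [/\ size s = n, (forall x, List.In x s -> A x),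
    (forall i j, (i < n)%N -> (j < n)%N -> B (s`_i - s`_j) -> i = j)
    & forall a, A a -> exists2 i, (i < n)%N & B (a - s`_i)].

(* M / L is isomorphic (as R-module) to R / P: f induces an R-linear bijection
   M/L -> R/P (additive and R-linear modulo P, surjective modulo P, kernel L). *)
Definition quot_iso_Rmod (R : comUnitRingType) (M : lmodType R) (L : M -> Prop)
  (P : R -> Prop) : Prop :=
  exists f : M -> R,
    [/\ (forall x y, P (f (x + y) - (f x + f y))),
        (forall (r : R) x, P (f (r *: x) - r * f x)),
        (forall r : R, exists x, P (f x - r))
      & (forall x, P (f x) <-> L x)].

(* Main.v *)
Require Import Defs.
From HB Require Import structures.
From mathcomp Require Import all_boot all_order all_algebra.
From mathcomp Require Import ring.
From Stdlib Require Import Classical ClassicalEpsilon IndefiniteDescription.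
From Stdlib Require List.
Set Implicit Arguments. Unset Strict Implicit. Unset Printing Implicit Defensive.
Import Order.TTheory GRing.Theory Num.Theory.
Local Open Scope ring_scope.

Lemma Z_subDD (V : zmodType) (a b c d : V) : (a + b) - (c + d) = (a - c) + (b - d).
Proof. by rewrite opprD addrACA. Qed.
Lemma Z2 (V : zmodType) (a b c : V) : (a - c) - (b - c) = a - b.
Proof. by rewrite opprB addrA subrK. Qed.
Lemma Z3 (V : zmodType) (a b : V) : a - (a - b) = b.
Proof. by rewrite opprB addrC subrK. Qed.
Lemma Z1 (V : zmodType) (a S p w x : V) : a + S - (w + x) = (a - p) + (p - w) + (S - x).
Proof. by rewrite (addrA (a - p)) subrK Z_subDD. Qed.

Definition grp (X : zmodType) (B : X -> Prop) := B 0 /\ forall x y, B x -> B y -> B (x - y).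

Lemma grpN X B : @grp X B -> forall x, B x -> B (- x).
Proof. move=> [h0 hs] x hx; rewrite -sub0r; exact: hs. Qed.
Lemma grpD X B : @grp X B -> forall x y, B x -> B y -> B (x + y).
Proof. move=> g x y hx hy; rewrite -[y]opprK; apply: g.2 => //; exact: grpN. Qed.
Lemma grp_sym X B : @grp X B -> forall x y, B (x - y) -> B (y - x).
Proof. move=> g x y h; rewrite -opprB; exact: grpN. Qed.
Lemma grp_trans X B : @grp X B -> forall x y z, B (x - y) -> B (y - z) -> B (x - z).
Proof. move=> g x y z h1 h2; have := grpD g h1 h2; by rewrite addrA subrK. Qed.

Lemma inP (T : eqType) (x : T) s : List.In x s <-> x \in s.
Proof.
elim: s => [|y s IH] /=; first by rewrite in_nil.
rewrite in_cons; split.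
- case=> [->|/IH ->]; [by rewrite eqxx | by rewrite orbT].
- case/orP=> [/eqP ->|/IH]; [by left | by right].
Qed.

Definition irr (X : zmodType) (B : X -> Prop) (t : seq X) :=
  forall i j, (i < size t)%N -> (j < size t)%N -> B (t`_i - t`_j) -> i = j.

Lemma reduce (X : zmodType) (A B : X -> Prop) : grp B -> forall s : seq X,
  (forall x, x \in s -> A x) -> exists t : seq X,
  [/\ (forall x, x \in t -> A x), irr B t & forall x, x \in s -> exists2 y, y \in t & B (x - y)].
Proof.
move=> g; elim=> [|x s IH] hA.
  by exists [::]; split=> // [x|i j]; rewrite ?in_nil.
have [t [tA tI tC]] := IH (fun y hy => hA y (mem_behead (s := x :: s) hy)).
case: (classic (exists2 y, y \in t & B (x - y))) => [hx|hx].
  exists t; split=> // z; rewrite in_cons => /orP [/eqP->//|]; exact: tC.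
exists (x :: t); split.
- move=> z; rewrite in_cons => /orP [/eqP->|/tA//]; apply: hA; exact: mem_head.
- move=> [|i] [|j] //= hi hj hB.
  + exfalso; apply: hx; exists t`_j; [exact: mem_nth | done].
  + exfalso; apply: hx; exists t`_i; [exact: mem_nth | exact: grp_sym hB].
  + by congr S; apply: tI.
- move=> z; rewrite in_cons => /orP [/eqP->|/tC [y hy hB]].
  + exists x; [exact: mem_head | rewrite subrr; exact: g.1].
  + by exists y => //; rewrite in_cons hy orbT.
Qed.

Lemma cover_qcard (X : zmodType) (A B : X -> Prop) (s : seq X) : grp B ->
  (forall x, x \in s -> A x) -> (forall a, A a -> exists2 x, x \in s & B (a - x)) ->
  exists n, qcard A B n.
Proof.
move=> g sA sC; have [t [tA tI tC]] := reduce g sA.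
exists (size t), t; split=> //.
- by move=> x /inP /tA.
- move=> a /sC [x /tC [y yt hy] hx]; exists (index y t); first by rewrite index_mem.
  rewrite nth_index //; exact: grp_trans hx hy.
Qed.

Lemma irr_le (X : zmodType) (A B : X -> Prop) (s t : seq X) : grp B ->
  irr B s -> (forall x, x \in s -> A x) ->
  (forall a, A a -> exists2 j, (j < size t)%N & B (a - t`_j)) ->
  (size s <= size t)%N.
Proof.
move=> g sI sA tC.
have H : forall i : 'I_(size s), exists j : 'I_(size t), B (s`_i - t`_j).
  move=> i; have [j hj hB] := tC _ (sA _ (mem_nth 0 (ltn_ord i))).
  by exists (Ordinal hj).
pose h i := proj1_sig (constructive_indefinite_description _ (H i)).
have hP (i : 'I_(size s)) : B (s`_i - t`_(h i)) := proj2_sig (constructive_indefinite_description _ (H i)).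
have hinj : injective h.
  move=> i j e; apply: val_inj; apply: sI; rewrite ?ltn_ord //.
  have := grp_sym g (hP j); rewrite -e => h2; exact: grp_trans (hP i) h2.
by have := @leq_card _ _ h hinj; rewrite !card_ord.
Qed.

Lemma qcard_uniq (X : zmodType) (A B : X -> Prop) n m : grp B ->
  qcard A B n -> qcard A B m -> n = m.
Proof.
move=> g [s [ss sA sI sC]] [t [st tA tI tC]].
have sI' : irr B s by move=> i j; rewrite ss; exact: sI.
have tI' : irr B t by move=> i j; rewrite st; exact: tI.
have sA' x : x \in s -> A x by move/inP; exact: sA.
have tA' x : x \in t -> A x by move/inP; exact: tA.
have sC' a : A a -> exists2 j, (j < size s)%N & B (a - s`_j) by rewrite ss; exact: sC.
have tC' a : A a -> exists2 j, (j < size t)%N & B (a - t`_j) by rewrite st; exact: tC.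
apply/eqP; rewrite eqn_leq -ss -st (irr_le g sI' sA' tC') (irr_le g tI' tA' sC') //.
Qed.

Lemma transfer (X Y : zmodType) (A B : X -> Prop) (A' B' : Y -> Prop) (h : X -> Y) n :
  grp B' -> (forall a, A a -> A' (h a)) ->
  (forall x y, A x -> A y -> B' (h x - h y) -> B (x - y)) ->
  (forall a', A' a' -> exists2 a, A a & B' (a' - h a)) ->
  (forall x y, A x -> A y -> B (x - y) -> B' (h x - h y)) ->
  qcard A B n -> qcard A' B' n.
Proof.
move=> g hA hinj hsurj hhom [s [ss sA sI sC]].
have sA' i : (i < n)%N -> A s`_i.
  by move=> hi; apply: sA; apply/inP; apply: mem_nth; rewrite ss.
exists (map h s); split.
- by rewrite size_map.
- move=> x /inP /mapP [y /inP hy ->]; exact: hA (sA _ hy).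
- move=> i j hi hj; rewrite !(nth_map 0) ?ss // => hB; apply: sI => //.
  exact: hinj (sA' _ hi) (sA' _ hj) hB.
- move=> a' /hsurj [a ha hB]; have [i hi hB2] := sC _ ha; exists i => //.
  rewrite (nth_map 0) ?ss //; apply: (grp_trans g hB); exact: hhom ha (sA' _ hi) hB2.
Qed.

Lemma tower (X : zmodType) (A B C : X -> Prop) n1 n2 : grp A -> grp B -> grp C ->
  (forall x, B x -> A x) -> (forall x, C x -> B x) ->
  qcard A B n1 -> qcard B C n2 -> qcard A C (n1 * n2).
Proof.
move=> gA gB gC BA CB [s [ss sA sI sC]] [t [st tA tI tC]].
have sA' i : (i < n1)%N -> A s`_i.
  by move=> hi; apply: sA; apply/inP; apply: mem_nth; rewrite ss.
have tA' i : (i < n2)%N -> B t`_i.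
  by move=> hi; apply: tA; apply/inP; apply: mem_nth; rewrite st.
have bnd k : (k < n1 * n2)%N -> [/\ (0 < n2)%N, (k %/ n2 < n1)%N & (k %% n2 < n2)%N].
  move=> hk; have n2p : (0 < n2)%N by case: n2 hk {st tA tI tC tA'} => //; rewrite muln0.
  by rewrite ltn_divLR // ltn_pmod.
have nthu k : (k < n1 * n2)%N ->
  [seq s`_(k %/ n2) + t`_(k %% n2) | k <- iota 0 (n1 * n2)]`_k = s`_(k %/ n2) + t`_(k %% n2).
  by move=> hk; rewrite (nth_map 0%N) ?size_iota // nth_iota // add0n.
exists [seq s`_(k %/ n2) + t`_(k %% n2) | k <- iota 0 (n1 * n2)]; split.
- by rewrite size_map size_iota.
- move=> x /inP /mapP [k]; rewrite mem_iota add0n => /andP [_ hk] ->.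
  have [_ h1 h2] := bnd k hk; exact: (grpD gA (sA' _ h1) (BA _ (tA' _ h2))).
- move=> i j hi hj; rewrite nthu // nthu // Z_subDD => hC.
  have [n2p hi1 hi2] := bnd i hi; have [_ hj1 hj2] := bnd j hj.
  have hB := CB _ hC.
  have ht : B (t`_(i %% n2) - t`_(j %% n2)) by apply: gB.2; apply: tA'.
  have hq : (i %/ n2 = j %/ n2)%N.
    apply: sI => //; have := gB.2 _ _ hB ht; by rewrite addrK.
  move: hC; rewrite hq subrr add0r => /tI hr.
  by rewrite (divn_eq i n2) (divn_eq j n2) hq hr.
- move=> a ha; have [q hq hB] := sC _ ha; have [r hr hC] := tC _ hB.
  have n2p : (0 < n2)%N by case: n2 hr {st tA tI tC tA' bnd nthu}.
  have e1 : ((q * n2 + r) %/ n2 = q)%N by rewrite divnMDl // divn_small // addn0.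
  have e2 : ((q * n2 + r) %% n2 = r)%N by rewrite modnMDl modn_small.
  have hk : (q * n2 + r < n1 * n2)%N by rewrite -ltn_divLR // e1.
  exists (q * n2 + r)%N => //; rewrite nthu // e1 e2 opprD addrA //.
Qed.

Lemma sum_closed (V : zmodType) (Q : V -> Prop) (T : Type) (s : seq T) (F : T -> V) :
  Q 0 -> (forall x y, Q x -> Q y -> Q (x + y)) -> (forall t, List.In t s -> Q (F t)) ->
  Q (\sum_(t <- s) F t).
Proof.
move=> h0 hD; elim: s => [|t s IH] hs; first by rewrite big_nil.
rewrite big_cons; apply: hD; [apply: hs; by left | apply: IH => u hu; apply: hs; by right].
Qed.

Definition pick (T : Type) (Q : T -> Prop) (d : T) : T :=
  match excluded_middle_informative (exists x, Q x) with
  | left h => proj1_sig (constructive_indefinite_description _ h)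
  | right _ => d end.
Lemma pickP T Q d : (exists x, Q x) -> Q (@pick T Q d).
Proof. rewrite /pick; case: excluded_middle_informative => // h _; exact: proj2_sig. Qed.
Lemma pick_def T Q d : ~ (exists x, Q x) -> @pick T Q d = d.
Proof. by rewrite /pick; case: excluded_middle_informative. Qed.

Lemma ideal_grp (R : comUnitRingType) (I : R -> Prop) : is_ideal I -> grp I.
Proof. case=> h0 hD hM; split=> // x y hx hy; rewrite -mulN1r; exact: hD hx (hM _ _ hy). Qed.

Lemma submod_grp (R : comUnitRingType) (M : lmodType R) (N : M -> Prop) : is_submod N -> grp N.
Proof. case=> h0 hD hM; split=> // x y hx hy; rewrite -scaleN1r; exact: hD hx (hM _ _ hy). Qed.

Lemma idmod_submod (R : comUnitRingType) (M : lmodType R) I N :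
  is_ideal I -> is_submod (@idmod R M I N).
Proof.
case=> _ _ hM; split.
- by exists [::]; rewrite big_nil.
- move=> x y [s [hs ->]] [t [ht ->]]; exists (s ++ t); rewrite big_cat; split=> //.
  move=> u hu; case: (List.in_app_or _ _ _ hu) => ?; [exact: hs|exact: ht].
- move=> r x [s [hs ->]]; exists [seq (r * u.1, u.2) | u <- s]; split.
  + move=> u hu; case: (proj1 (List.in_map_iff _ _ _) hu) => v [<- hv] /=; have [h1 h2] := hs _ hv; split=> //; exact: hM.
  + rewrite big_map scaler_sumr; apply: eq_bigr => u _ /=; by rewrite scalerA.
Qed.

Lemma idmod_single (R : comUnitRingType) (M : lmodType R) (I : R -> Prop) (N : M -> Prop) r m :
  I r -> N m -> idmod I N (r *: m).
Proof. move=> hr hm; exists [:: (r, m)]; split; [by move=> t [<-|[]] | by rewrite big_seq1]. Qed.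

Lemma idmod_in (R : comUnitRingType) (M : lmodType R) (I : R -> Prop) (N : M -> Prop) x :
  is_submod N -> idmod I N x -> N x.
Proof.
case=> h0 hD hS [s [hs ->]]; apply: sum_closed => // t /hs [_ h]; exact: hS.
Qed.

Lemma idmod_mono (R : comUnitRingType) (M : lmodType R) (I : R -> Prop) (N N' : M -> Prop) x :
  (forall y, N y -> N' y) -> idmod I N x -> idmod I N' x.
Proof. move=> hN [s [hs ->]]; exists s; split=> // t /hs [h1 h2]; split=> //; exact: hN. Qed.

Lemma bideal_ideal (R : comUnitRingType) (u1 u2 : R) Lam : is_ideal (bideal u1 u2 Lam).
Proof.
split.
- by exists [::]; rewrite big_nil.
- move=> x y [s [hs ->]] [t [ht ->]]; exists (s ++ t); rewrite big_cat; split=> //.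
  move=> u hu; case: (List.in_app_or _ _ _ hu) => ?; [exact: hs|exact: ht].
- move=> r x [s [hs ->]]; exists [seq (r * u.1, u.2) | u <- s]; split.
  + move=> u hu; case: (proj1 (List.in_map_iff _ _ _) hu) => v [<- hv] /=; exact: hs.
  + rewrite big_map mulr_sumr; apply: eq_bigr => u _ /=; by rewrite mulrA.
Qed.

Unset Implicit Arguments.

Theorem lemma5p2 (R : comUnitRingType) (u1 u2 : R) (hR : is_laurent2 u1 u2)
  (M : lmodType R) (L : M -> Prop) (P : R -> Prop) (Lam : int * int -> Prop)
  (hM : noetherian_sub (fun _ : M => True))
  (hL : is_submod L) (hLn : noetherian_sub L)
  (hP : is_prime_ideal P) (hiso : quot_iso_Rmod L P)
  (hLam : is_fi_subgroup Lam)
  (nM : nat) (hfin : qcard (fun _ : M => True) (idmod (bideal u1 u2 Lam) (fun _ => True)) nM) :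
  exists A : R -> Prop,
    [/\ is_ideal A,
        (forall x, idprod (bideal u1 u2 Lam) P x -> A x),
        (forall x, A x -> bideal u1 u2 Lam x /\ P x)
      & exists nQ nL nA : nat,
          [/\ qcard (fun _ : R => True) (idsum (bideal u1 u2 Lam) P) nQ,
              qcard L (idmod (bideal u1 u2 Lam) L) nL,
              qcard (fun x => bideal u1 u2 Lam x /\ P x) A nA
            & nM * nA = nQ * nL]%N].
Proof.
have bI : is_ideal (bideal u1 u2 Lam) := bideal_ideal u1 u2 Lam.
set b := bideal u1 u2 Lam in bI hfin *.
have bG := ideal_grp bI.
case: (bI) => b0 bD bMul.
case: hP => PI _ _.
have PG := ideal_grp PI.
case: (PI) => P0 PD' PM.
have PD := grpD PG. have PB := PG.2. have PN := grpN PG.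
have Peq : forall y x, P y -> x = y -> P x by move=> y x h ->.
case: hiso => f [fadd fscal fsurj fker].
have [m0 hm0] := fsurj 1.
case: (hL) => L0 LD LS. have LG := submod_grp hL.
set bM := idmod b (fun _ : M => True) in hfin *.
set bL := idmod b L.
have bMs : is_submod bM := idmod_submod _ bI.
have bLs : is_submod bL := idmod_submod _ bI.
have bMG := submod_grp bMs. have bLG := submod_grp bLs.
case: (bLs) => bL0 bLD bLS.
have bMsingle r m : b r -> bM (r *: m) by move=> hr; exact: idmod_single.
have bLsingle r m : b r -> L m -> bL (r *: m) by move=> hr hm; exact: idmod_single.
have bLL x : bL x -> L x by move=> h; exact: idmod_in hL h.
have bLbM x : bL x -> bM x by apply: idmod_mono.
have fsub x y : P (f (x - y) - (f x - f y)).
  have h1 := fadd x (- y); have h2 := fscal (-1) y.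
  rewrite scaleN1r mulN1r in h2.
  apply: (Peq _ _ (PD _ _ h1 h2)); ring.
have f0 : P (f 0).
  by have := fscal 0 0; rewrite scale0r mul0r subr0.
have fsum (s : seq (R * M)) : P (f (\sum_(t <- s) t.1 *: t.2) - \sum_(t <- s) t.1 * f t.2).
  elim: s => [|t s IH]; first by rewrite !big_nil subr0.
  rewrite !big_cons.
  have h1 := fadd (t.1 *: t.2) (\sum_(t <- s) t.1 *: t.2).
  have h2 := fscal t.1 t.2.
  apply: (Peq _ _ (PD _ _ (PD _ _ h1 h2) IH)); ring.
have mL r : P r -> L (r *: m0).
  move=> hr; apply/fker; have h1 := fscal r m0.
  apply: (Peq _ _ (PD _ _ h1 (PM (f m0) r hr))); ring.
have Lm r : L (r *: m0) -> P r.
  move=> /fker h; have h1 := fscal r m0; have h2 := PM r _ hm0.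
  apply: (Peq _ _ (PB _ _ (PB _ _ h h1) h2)); ring.
have mrep m : L (m - f m *: m0).
  apply/fker; have h1 := fsub m (f m *: m0); have h2 := fscal (f m) m0.
  have h3 := PM (f m) _ hm0.
  apply: (Peq _ _ (PB _ _ (PB _ _ h1 h2) h3)); ring.
pose K := fun x : M => L x /\ bM x.
pose LbM := fun x : M => exists l w, [/\ L l, bM w & x = l + w].
pose bcP := fun r : R => b r /\ P r.
pose Aid := fun r : R => [/\ b r, P r & bL (r *: m0)].
have KG : grp K.
  split; first by split; [exact: LG.1 | exact: bMG.1].
  by move=> x y [h1 h2] [h3 h4]; split; [exact: LG.2 | exact: bMG.2].
have Ks : is_submod K.
  case: bMs => bM0 bMD bMS; split; first by split.
  - by move=> x y [h1 h2] [h3 h4]; split; [exact: LD | exact: bMD].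
  - by move=> r x [h1 h2]; split; [exact: LS | exact: bMS].
have LbMG : grp LbM.
  split; first by exists 0, 0; split; [exact: L0 | exact: bMG.1 | rewrite addr0].
  move=> x y [l [w [hl hw ->]]] [l' [w' [hl' hw' ->]]]; exists (l - l'), (w - w'); split.
  + exact: LG.2.
  + exact: bMG.2.
  + exact: Z_subDD.
have bcPG : grp bcP.
  split; first by split; [exact: bG.1 | exact: PG.1].
  by move=> x y [h1 h2] [h3 h4]; split; [exact: bG.2 | exact: PG.2].
have AidI : is_ideal Aid.
  split.
  - by split; [exact: b0 | exact: P0 | rewrite scale0r].
  - move=> x y [h1 h2 h3] [h4 h5 h6]; split; [exact: bD | exact: PD | rewrite scalerDl; exact: bLD].
  - move=> r x [h1 h2 h3]; split; [exact: bMul | exact: PM | rewrite -scalerA; exact: bLS].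
have AidG := ideal_grp AidI.
have surjK k : K k -> exists2 r, bcP r & bL (k - r *: m0).
  case=> hk [s [hs ek]].
  have hbL : bL (k - (\sum_(t <- s) t.1 * f t.2) *: m0).
    rewrite ek scaler_suml -sumrB; apply: (sum_closed bL0 bLD) => t ht.
    have [h1 _] := hs t ht; rewrite -scalerA -scalerBr; exact: bLsingle h1 (mrep _).
  exists (\sum_(t <- s) t.1 * f t.2) => //; split.
  - apply: (sum_closed b0 bD) => t ht.
    have [h1 _] := hs t ht; rewrite mulrC; exact: bMul.
  - apply: Lm; rewrite -(Z3 k (_ *: m0)); exact: LG.2 hk (bLL _ hbL).

have [s [ss sAll sI sC]] := hfin.
have [n1 qLbM] : exists n1, qcard (fun _ : M => True) LbM n1.
  apply: (cover_qcard (s := s)) => // a _.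
  have [i hi hB] := sC a I; exists s`_i; first by apply: mem_nth; rewrite ss.
  exists 0, (a - s`_i); split; [exact: L0 | exact: hB | by rewrite add0r].
have BPG : grp (idsum b P).
  split; first by exists 0, 0; split; [exact: b0 | exact: P0 | rewrite addr0].
  move=> x y [a [p [ha hp ->]]] [a' [p' [ha' hp' ->]]]; exists (a - a'), (p - p'); split.
  + exact: bG.2.
  + exact: PG.2.
  + exact: Z_subDD.
have qBP : qcard (fun _ : R => True) (idsum b P) n1.
  refine (transfer (h := f) _ _ _ _ _ qLbM) => //.
  - move=> x y _ _ [be [pi [hbe hpi e]]].
    exists (x - y - be *: m0), (be *: m0); split; last by rewrite subrK.
    + apply/fker.
      have h1 := fsub (x - y) (be *: m0); have h2 := fsub x y; have h3 := fscal be m0.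
      have h5 := PM be _ hm0.
      have ex : f x = be + pi + f y by rewrite -e subrK.
      rewrite ex in h2.
      apply: (Peq _ _ (PB _ _ (PD _ _ (PB _ _ (PD _ _ h1 h2) h3) hpi) h5)); ring.
    + exact: bMsingle.
  - move=> a' _; have [x hx] := fsurj a'; exists x => //; exists 0, (a' - f x).
    split; [exact: b0 | rewrite -opprB; exact: PN | by rewrite add0r].
  - move=> x y _ _ [l [w [hl [s' [hs' ew]] e]]].
    exists (\sum_(t <- s') t.1 * f t.2), (f x - f y - \sum_(t <- s') t.1 * f t.2).
    split; last by rewrite [RHS]addrC subrK.
    + apply: (sum_closed b0 bD) => t ht; have [h1 _] := hs' t ht; rewrite mulrC; exact: bMul.
    + have h2 := fsub x y; rewrite e ew in h2.
      have h6 := fadd l (\sum_(t <- s') t.1 *: t.2); have h7 := proj2 (fker l) hl.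
      have h8 := fsum s'.
      apply: (Peq _ _ (PD _ _ (PD _ _ (PD _ _ (PN _ h2) h6) h7) h8)); ring.
have [n2 qLK] : exists n2, qcard L K n2.
  pose t := fun y : M => pick (fun x => L x /\ bM (x - y)) 0.
  have tL y : L (t y).
    case: (classic (exists x, L x /\ bM (x - y))) => [h|h].
    - by case: (pickP 0 h).
    - by rewrite /t pick_def.
  apply: (cover_qcard (s := map t s)) => //.
  - by move=> x /mapP [y _ ->].
  - move=> l hl; have [i hi hB] := sC l I.
    have ex : exists x, L x /\ bM (x - s`_i) by exists l.
    have [h1 h2] : L (t s`_i) /\ bM (t s`_i - s`_i) := pickP 0 ex.
    exists (t s`_i); first by apply: map_f; apply: mem_nth; rewrite ss.
    split; first exact: LG.2.
    by rewrite -(Z2 l (t s`_i) s`_i); exact: bMG.2.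
have qLbM2 : qcard LbM bM n2.
  refine (transfer (h := fun x : M => x) _ _ _ _ _ qLK) => //.
  - move=> a ha; exists a, 0; split=> //; [exact: bMG.1 | by rewrite addr0].
  - by move=> x y hx hy hB; split; [exact: LG.2 | done].
  - move=> a' [l [w [hl hw ->]]]; exists l => //; by rewrite addrC addKr.
  - by move=> x y _ _ [].
have qM : qcard (fun _ : M => True) bM (n1 * n2).
  apply: (tower _ LbMG bMG _ _ qLbM qLbM2).
  - by split.
  - by [].
  - by move=> x hx; exists 0, x; split; [exact: L0 | exact: hx | rewrite add0r].
have enM : nM = (n1 * n2)%N := qcard_uniq bMG hfin qM.
have KL x : K x -> L x by case.
have [gens [gK gS]] := hLn K Ks KL.
have [q [qs qAll qI qC]] := qBP.
pose rho := fun g : M => pick (fun r => bcP r /\ bL (g - r *: m0)) 0.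
have rhoP g : K g -> bcP (rho g) /\ bL (g - rho g *: m0).
  move=> hg; have [r h1 h2] := surjK g hg.
  exact: (@pickP _ (fun r => bcP r /\ bL (g - r *: m0)) 0 (ex_intro _ r (conj h1 h2))).
have cov : forall gs : seq M, (forall g, List.In g gs -> K g) -> exists T : seq R,
    (forall x, x \in T -> bcP x) /\ forall c : seq R, exists2 x, x \in T &
      bL (\sum_(i < size gs) c`_i *: gs`_i - x *: m0).
  elim=> [|g gs IH] hK.
    exists [:: 0]; split.
    - move=> x; rewrite mem_seq1 => /eqP ->; exact: bcPG.1.
    - move=> c; exists 0; first exact: mem_head.
      by rewrite big_ord0 scale0r subr0.
  have [T [TA TC]] := IH (fun g' h => hK g' (or_intror h)).
  have [[hrb hrp] hrL] := rhoP g (hK g (or_introl erefl)).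
  exists [seq e * rho g + x | e <- q, x <- T]; split.
  - move=> z /allpairsP [[e x] [/= he hx ->]]; have [hxb hxp] := TA x hx; split.
    + exact: bD (bMul _ _ hrb) hxb.
    + exact: PD (PM _ _ hrp) hxp.
  - move=> c; have [x' hx' hS] := TC (behead c).
    have [i hi [be [pi [hbe hpi e]]]] := qC c`_0 I.
    exists (q`_i * rho g + x'); first by apply: allpairs_f => //; apply: mem_nth; rewrite qs.
    rewrite /= big_ord_recl /=.
    rewrite (eq_bigr (fun j : 'I_(size gs) => (behead c)`_j *: gs`_j)); last first.
      by move=> j _; rewrite /bump leq0n add0n add1n nth_behead.
    rewrite scalerDl -scalerA (Z1 _ _ (c`_0 *: (rho g *: m0))).
    apply: (bLD); first apply: (bLD).
    + rewrite -scalerBr; exact: bLS.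
    + rewrite -scalerBl e scalerDl; apply: (bLD); first exact: bLsingle (mL _ hrp).
      rewrite scalerA mulrC -scalerA; exact: bLsingle hrb (mL _ hpi).
    + exact: hS.
have [TT [TTA TTC]] := cov gens gK.
have [nA qAid] : exists nA, qcard bcP Aid nA.
  apply: (cover_qcard (s := TT) AidG TTA) => r [hrb hrp].
  have hK : K (r *: m0) by split; [exact: mL | exact: bMsingle].
  have [c ec] := gS _ hK.
  have [x hx hB] := TTC c; exists x => //.
  have [hxb hxp] := TTA x hx.
  split; [exact: bG.2 | exact: PG.2 | rewrite scalerBl ec; exact: hB].
have qKbL : qcard K bL nA.
  refine (@transfer R M bcP Aid K bL (fun r => r *: m0) nA _ _ _ _ _ qAid) => //.
  - by move=> r [h1 h2]; split; [exact: mL | exact: bMsingle].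
  - move=> x y [h1 h2] [h3 h4] hB; split; [exact: bG.2 | exact: PG.2 | by rewrite scalerBl].
  - by move=> x y _ _ [_ _ h]; rewrite -scalerBl.
have qLbL : qcard L bL (n2 * nA).
  apply: (tower LG KG bLG KL _ qLK qKbL) => x hx; split; [exact: bLL | exact: bLbM].
exists Aid; split => //.
- move=> x [s' [hs' ->]]; split.
  + apply: (sum_closed b0 bD) => t ht; have [h1 h2] := hs' t ht; rewrite mulrC; exact: bMul.
  + apply: (sum_closed P0 PD') => t ht; have [h1 h2] := hs' t ht; exact: PM.
  + rewrite scaler_suml; apply: (sum_closed bL0 bLD) => t ht; have [h1 h2] := hs' t ht.
    rewrite -scalerA; exact: bLsingle h1 (mL _ h2).
- by move=> x [h1 h2 _].
- exists n1, (n2 * nA)%N, nA; split => //.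
  by rewrite enM mulnA.
Qed.
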